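(* Let $X,Y$ be metrizable vector spaces over $K$ with metrics $d_X,d_Y$, and let $F:X\to Y$. For $r>0$ put $B_X(r)=\{x\in X:d_X(x,0)<r\}$ and $B_Y(r)=\{y\in Y:d_Y(y,0)<r\}$. (i) If $F\in B_d(X,Y)$, then for every $\epsilon_1>0$ there exists $\epsilon_2>0$ with $F[B_X(\epsilon_1)]\subset B_Y(\epsilon_2)$. (ii) Conversely, suppose that the limit $\lim_{x\to0}\frac{d_Y[F(x),0]}{d_X(x,0)}$ exists and is finite, that there are $\epsilon,\epsilon^*>0$ such that $F$ maps the complement of $B_X(\epsilon)$ into a bounded subset of $B_Y(\epsilon^* )$, and that for every $\epsilon_1>0$ there exists $\epsilon_2>0$ with $F[B_X(\epsilon_1)]\subset B_Y(\epsilon_2)$. Then $F\in B_d(X,Y)$.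
   Context: $K$ is $\mathbb{R}$ or $\mathbb{C}$. For maps $F_1,F_2:X\to Y$, $d(F_1,F_2)=\max\left\{\sup_{x\neq0,x\in X}\frac{d_Y[F_1(x),F_2(x)]}{d_X(x,0)},\ d_Y[F_1(0),F_2(0)]\right\}\in[0,\infty]$, and $B_d(X,Y)$ is the set of maps $F:X\to Y$ with $d(F,0)<\infty$. *)

(* Defs.v *)
From HB Require Import structures.
From mathcomp Require Import all_boot all_order all_algebra.
From mathcomp Require Import all_classical all_reals ereal.
From mathcomp Require Import complex.
Set Implicit Arguments. Unset Strict Implicit. Unset Printing Implicit Defensive.
Import Order.TTheory GRing.Theory Num.Theory.
Local Open Scope ring_scope.

Definition scalarK (R : realType) (b : bool) : numFieldType :=
  if b then (R : numFieldType) else ((R[i])%C : numFieldType).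

Section Metrizable.
Variables (R : realType) (K : numFieldType) (X : lmodType K).

Definition is_metric (d : X -> X -> R) : Prop :=
  [/\ (forall x y, 0 <= d x y),
      (forall x y, d x y = 0 <-> x = y),
      (forall x y, d x y = d y x) &
      (forall x y z, d x z <= d x y + d y z)].

(* X with the metric topology of d is a topological vector space:
   addition and scalar multiplication are (jointly) continuous. *)
Definition metrizable_vs (d : X -> X -> R) : Prop :=
  [/\ is_metric d,
      (forall (x y : X) (e : R), 0 < e ->
         exists2 del : R, 0 < del &
           forall x' y', d x' x < del -> d y' y < del -> d (x' + y') (x + y) < e) &
      (forall (a : K) (x : X) (e : R), 0 < e ->
         exists2 delK : K, 0 < delK &
         exists2 del : R, 0 < del &
           forall (a' : K) x', `|a' - a| < delK -> d x' x < del ->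
             d (a' *: x') (a *: x) < e)].
End Metrizable.

Section Bd.
Variables (R : realType) (K : numFieldType) (X Y : lmodType K).
Variables (dX : X -> X -> R) (dY : Y -> Y -> R).
Local Open Scope classical_set_scope.

Definition dmap (F1 F2 : X -> Y) : \bar R :=
  Order.max
    (ereal_sup [set ((dY (F1 x) (F2 x)) / dX x 0)%:E | x in [set x : X | x != 0]])
    (dY (F1 0) (F2 0))%:E.

Definition Bd (F : X -> Y) : Prop := (dmap F (fun _ => 0%R) < +oo)%E.

Definition ballX (r : R) : set X := [set x | dX x 0 < r].
Definition ballY (r : R) : set Y := [set y | dY y 0 < r].
End Bd.

(* Main.v *)
Require Import Defs.
From HB Require Import structures.
From mathcomp Require Import all_boot all_order all_algebra.
From mathcomp Require Import all_classical all_reals ereal.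
From mathcomp Require Import lra.
Import Order.TTheory GRing.Theory Num.Theory.
Local Open Scope ring_scope.
Local Open Scope classical_set_scope.

Theorem theorem8 (R : realType) (b : bool)
  (X Y : lmodType (scalarK R b)) (dX : X -> X -> R) (dY : Y -> Y -> R)
  (hX : metrizable_vs dX) (hY : metrizable_vs dY) (F : X -> Y) :
  (* (i) *)
  (Bd dX dY F ->
     forall e1 : R, 0 < e1 ->
       exists2 e2 : R, 0 < e2 & F @` ballX dX e1 `<=` ballY dY e2)
  /\
  (* (ii) *)
  ((exists L : R, forall e : R, 0 < e ->
       exists2 del : R, 0 < del &
         forall x : X, x != 0 -> dX x 0 < del ->
           `|dY (F x) 0 / dX x 0 - L| < e) ->
   (exists eps : R, exists epsS : R, [/\ 0 < eps, 0 < epsS &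
       exists2 M : R, 0 <= M &
         F @` (~` ballX dX eps) `<=` ballY dY epsS `&` ballY dY M]) ->
   (forall e1 : R, 0 < e1 ->
       exists2 e2 : R, 0 < e2 & F @` ballX dX e1 `<=` ballY dY e2) ->
   Bd dX dY F).
Proof.
case: hX => -[dX0 dXeq _ _] _ _.
case: hY => -[dY0 _ _ _] _ _.
split.
- rewrite /Bd /dmap gt_max => /andP[hS _] e1 e1p.
  set S := ereal_sup _ in hS.
  have [c hc] : exists c : R, (S <= c%:E)%E.
    case: S hS => [r _|//|_]; [by exists r | by exists 0; rewrite leNye].
  pose C := Num.max c 0.
  have C0 : 0 <= C by rewrite le_max lexx orbT.
  have hq : forall x, x != 0 -> dY (F x) 0 / dX x 0 <= C.
    move=> x x0.
    have : ((dY (F x) 0 / dX x 0)%:E <= S)%E.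
      by apply: ereal_sup_ubound; exists x.
    move/le_trans/(_ hc); rewrite lee_fin => h.
    by rewrite le_max h.
  exists (C * e1 + dY (F 0) 0 + 1).
    have := dY0 (F 0) 0; have : 0 <= C * e1 by rewrite mulr_ge0 // ltW.
    lra.
  move=> _ [x xb <-]; rewrite /ballY /=.
  have d0 := dY0 (F 0) 0.
  have Ce : 0 <= C * e1 by rewrite mulr_ge0 // ltW.
  case: (eqVneq x 0) => [->|x0]; first lra.
  have dxp : 0 < dX x 0.
    rewrite lt_def dX0 andbT; apply/eqP => /dXeq h; by rewrite h eqxx in x0.
  have := hq x x0; rewrite ler_pdivrMr // => h1.
  have : C * dX x 0 <= C * e1 by rewrite ler_wpM2l // ltW.
  move: xb; rewrite /ballX /= => xb.
  lra.
- move=> [L hL] [eps [epsS [eps0 epsS0 [M M0 hM]]]] hball.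
  have [del del0 hdel] := hL 1 ltr01.
  have [e2 e20 he2] := hball eps eps0.
  pose B := Num.max M e2.
  have B0 : 0 <= B by rewrite le_max M0.
  have hF : forall x, dY (F x) 0 <= B.
    move=> x; case: (ltP (dX x 0) eps) => h.
      have := he2 _ (ex_intro2 _ _ x h erefl); rewrite /ballY /= => h2.
      by rewrite le_max (ltW h2) orbT.
    have hx : (~` ballX dX eps) x by rewrite /ballX /= => h'; move: h; rewrite leNgt h'.
    have := hM _ (ex_intro2 _ _ x hx erefl); rewrite /ballY /= => -[_ h2].
    by rewrite le_max (ltW h2).
  rewrite /Bd /dmap gt_max ltry andbT.
  apply: (@le_lt_trans _ _ (Num.max (`|L| + 1) (B / del))%:E); last exact: ltry.
  apply: ge_ereal_sup => _ [x x0 <-]; rewrite lee_fin.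
  case: (ltP (dX x 0) del) => h.
    have := hdel x x0 h.
    have := ler_norm (dY (F x) 0 / dX x 0 - L).
    have := ler_norm L.
    move=> h1 h2 h3; rewrite le_max; apply/orP; left; lra.
  rewrite le_max; apply/orP; right.
  have dxp : 0 < dX x 0 by apply: lt_le_trans h.
  rewrite ler_pdivrMr // .
  apply: (le_trans (hF x)).
  rewrite mulrAC ler_pdivlMr //.
  by rewrite ler_wpM2l.
Qed.
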